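(* Suppose $U\in\mathbf{M}_{2N}(\mathbb{C})$ is a partial isometry with $U^{*}=U^{\sharp}$. Then there is a symplectic unitary $W\in\mathbf{M}_{2N}(\mathbb{C})$ such that $W\xi=U\xi$ for all $\xi\perp\ker(U)$.
   Context: A partial isometry is $U$ with $UU^*U=U$. For $X\in\mathbf{M}_{2N}(\mathbb{C})$ in $N\times N$ blocks $X=\begin{bmatrix}A&B\\C&D\end{bmatrix}$, $X^{\sharp}=\begin{bmatrix}D^{\mathrm T}&-B^{\mathrm T}\\-C^{\mathrm T}&A^{\mathrm T}\end{bmatrix}$, equivalently $X^\sharp=-ZX^{\mathrm T}Z$ with $Z=\begin{bmatrix}0&I\\-I&0\end{bmatrix}$. A symplectic unitary is a unitary $W\in\mathbf{M}_{2N}(\mathbb{C})$ with $W^{\mathrm T}ZW=Z$. *)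

(* Defs.v *)
From Stdlib Require Import Reals.
From mathcomp Require Import all_boot all_algebra.
From mathcomp Require Import complex Rstruct.
Set Implicit Arguments. Unset Strict Implicit. Unset Printing Implicit Defensive.
Import GRing.Theory Num.Theory.
Local Open Scope ring_scope.

Notation Cplx := (Rdefinitions.R[i]).

Definition adjmx {m n : nat} (A : 'M[Cplx]_(m, n)) : 'M[Cplx]_(n, m) :=
  (map_mx Num.conj A)^T.

Definition partial_isometry {n : nat} (U : 'M[Cplx]_n) : Prop :=
  U *m adjmx U *m U = U.

Definition sharp {N : nat} (X : 'M[Cplx]_(N + N)) : 'M[Cplx]_(N + N) :=
  block_mx (drsubmx X)^T (- (ursubmx X)^T) (- (dlsubmx X)^T) (ulsubmx X)^T.

Definition Zmx (N : nat) : 'M[Cplx]_(N + N) :=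
  block_mx 0 1%:M (- 1%:M) 0.

Definition unitary {n : nat} (W : 'M[Cplx]_n) : Prop :=
  adjmx W *m W = 1%:M /\ W *m adjmx W = 1%:M.

Definition symplectic_unitary {N : nat} (W : 'M[Cplx]_(N + N)) : Prop :=
  unitary W /\ W^T *m Zmx N *m W = Zmx N.

Definition perp_ker {m n : nat} (U : 'M[Cplx]_(m, n)) (xi : 'cV[Cplx]_n) : Prop :=
  forall eta : 'cV[Cplx]_n, U *m eta = 0 -> adjmx eta *m xi = 0.

(* Main.v *)
Require Import Defs.
From Stdlib Require Import Reals.
From mathcomp Require Import all_boot all_algebra.
From mathcomp Require Import complex Rstruct.
Import GRing.Theory Num.Theory.
Local Open Scope ring_scope.

Definition conjm {m n : nat} (A : 'M[Cplx]_(m, n)) : 'M[Cplx]_(m, n) :=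
  map_mx Num.conj A.

Lemma adjmxM m n p (A : 'M[Cplx]_(m, n)) (B : 'M[Cplx]_(n, p)) :
  adjmx (A *m B) = adjmx B *m adjmx A.
Proof. by rewrite /adjmx map_mxM trmx_mul. Qed.

Lemma adjmxK m n (A : 'M[Cplx]_(m, n)) : adjmx (adjmx A) = A.
Proof.
by apply/matrixP=> i j; rewrite !mxE conjCK.
Qed.

Lemma adjmxD m n (A B : 'M[Cplx]_(m, n)) : adjmx (A + B) = adjmx A + adjmx B.
Proof. by apply/matrixP=> i j; rewrite !mxE rmorphD. Qed.

Lemma adjmxN m n (A : 'M[Cplx]_(m, n)) : adjmx (- A) = - adjmx A.
Proof. by apply/matrixP=> i j; rewrite !mxE rmorphN. Qed.

Lemma adjmxB m n (A B : 'M[Cplx]_(m, n)) : adjmx (A - B) = adjmx A - adjmx B.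
Proof. by rewrite adjmxD adjmxN. Qed.

Lemma adjmx0 m n : adjmx (0 : 'M[Cplx]_(m, n)) = 0.
Proof. by apply/matrixP=> i j; rewrite !mxE rmorph0. Qed.

Lemma adjmx1 n : adjmx (1%:M : 'M[Cplx]_n) = 1%:M.
Proof. by rewrite /adjmx map_mx1 trmx1. Qed.

Lemma adjmxZ m n a (A : 'M[Cplx]_(m, n)) : adjmx (a *: A) = a^* *: adjmx A.
Proof. by apply/matrixP=> i j; rewrite !mxE rmorphM. Qed.

Lemma conjmM m n p (A : 'M[Cplx]_(m, n)) (B : 'M[Cplx]_(n, p)) :
  conjm (A *m B) = conjm A *m conjm B.
Proof. by rewrite /conjm map_mxM. Qed.

Lemma conjmK m n (A : 'M[Cplx]_(m, n)) : conjm (conjm A) = A.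
Proof. by apply/matrixP=> i j; rewrite !mxE conjCK. Qed.

Lemma conjm_adj m n (A : 'M[Cplx]_(m, n)) : conjm (adjmx A) = A^T.
Proof. by apply/matrixP=> i j; rewrite !mxE conjCK. Qed.

Lemma adj_conjm m n (A : 'M[Cplx]_(m, n)) : adjmx (conjm A) = A^T.
Proof. by apply/matrixP=> i j; rewrite !mxE conjCK. Qed.

Lemma adj_tr m n (A : 'M[Cplx]_(m, n)) : adjmx (A^T) = conjm A.
Proof. by apply/matrixP=> i j; rewrite !mxE. Qed.

Lemma adjE m n (A : 'M[Cplx]_(m, n)) : adjmx A = (conjm A)^T.
Proof. by []. Qed.

Section Z.
Context {N : nat}.
Local Notation Z := (Zmx N).

Lemma ZZ : Z *m Z = - 1%:M.
Proof.
rewrite /Zmx mulmx_block !mul0mx !mulmx0 !add0r !addr0 !mulmx1 ?mulNmx ?mul1mx.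
have -> : (1%:M : 'M[Cplx]_(N+N)) = block_mx 1%:M 0 0 1%:M := scalar_mx_block _ _ _.
by rewrite opp_block_mx !oppr0.
Qed.

Lemma trZ : Z^T = - Z.
Proof.
rewrite /Zmx tr_block_mx !trmx0 linearN /= trmx1 opp_block_mx !oppr0 opprK //.
Qed.

Lemma conjZ : conjm Z = Z.
Proof.
rewrite /conjm /Zmx map_block_mx !map_mx0 map_mxN map_mx1 //.
Qed.

Lemma adjZ : adjmx Z = - Z.
Proof. by rewrite adjE conjZ trZ. Qed.

Lemma sharpE (X : 'M[Cplx]_(N + N)) : sharp X = - (Z *m X^T *m Z).
Proof.
rewrite /sharp /Zmx -{5}[X]submxK tr_block_mx !mulmx_block.
rewrite ?mul0mx ?mulmx0 ?add0r ?addr0 ?mulmx1 ?mul1mx ?mulNmx ?mulmxN ?mul1mx ?mulmx1 ?mul0mx ?addr0 ?add0r.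
by rewrite opp_block_mx !opprK.
Qed.

End Z.
Section J.
Context {N : nat}.
Local Notation Z := (Zmx N).
Local Notation M := ('M[Cplx]_(N + N)).
Local Notation V := ('cV[Cplx]_(N + N)).

Definition jcomm (A : M) := Z *m conjm A = A *m Z.
Definition Jv (v : V) : V := Z *m conjm v.

Lemma jcomm_of_sharp (U : M) : adjmx U = sharp U -> jcomm U.
Proof.
rewrite sharpE => H.
have HU : U = - (Z *m (conjm U *m Z)).
  rewrite -[LHS]adjmxK H adjmxN !adjmxM adj_tr adjZ.
  by rewrite mulNmx !mulmxN opprK.
rewrite /jcomm {2}HU mulNmx -!mulmxA ZZ !mulmxN mulmx1 opprK.
by [].
Qed.

Lemma jcomm_tr (A : M) : jcomm A -> adjmx A *m Z = Z *m A^T.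
Proof.
move=> H; have := congr1 trmx H; rewrite !trmx_mul trZ -adjE mulmxN mulNmx.
by move/oppr_inj.
Qed.

Lemma jcomm_mul (A B : M) : jcomm A -> jcomm B -> jcomm (A *m B).
Proof.
by move=> HA HB; rewrite /jcomm conjmM mulmxA HA -mulmxA HB mulmxA.
Qed.

Lemma jcomm_add (A B : M) : jcomm A -> jcomm B -> jcomm (A + B).
Proof.
move=> HA HB; rewrite /jcomm /conjm map_mxD mulmxDr mulmxDl.
by rewrite -HA -HB.
Qed.

Lemma conjJ (v : V) : conjm (Jv v) = Z *m v.
Proof. by rewrite /Jv conjmM conjZ conjmK. Qed.

Lemma adjJ (v : V) : adjmx (Jv v) = - (v^T *m Z).
Proof. by rewrite /Jv adjmxM adj_conjm adjZ mulmxN. Qed.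

Lemma adjJJ (v w : V) : adjmx (Jv v) *m Jv w = conjm (adjmx v *m w).
Proof.
rewrite adjJ /Jv mulNmx -mulmxA [Z *m (Z *m _)]mulmxA ZZ mulNmx mul1mx mulmxN opprK.
by rewrite conjmM conjm_adj.
Qed.

Lemma tr11 (A : 'M[Cplx]_1) : A^T = A.
Proof. by rewrite [A]mx11_scalar tr_scalar_mx. Qed.

Lemma adjJ_self (v : V) : adjmx v *m Jv v = 0.
Proof.
rewrite /Jv adjE mulmxA; set x := conjm v.
set A := x^T *m Z *m x.
have HA : A = - A.
  rewrite -{1}[A]tr11 /A !trmx_mul trmxK trZ.
  by rewrite mulNmx mulmxN mulmxA.
clearbody A.
have H2 : A *+ 2 = 0 by rewrite mulr2n {2}HA subrr.
apply/matrixP=> i j; move/matrixP: H2 => /(_ i j); rewrite !mxE => /eqP.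
by rewrite -mulr2n mulrn_eq0 /= => /eqP.
Qed.

Lemma adj_self_J (v : V) : adjmx (Jv v) *m v = 0.
Proof. by rewrite -[LHS]adjmxK adjmxM adjmxK adjJ_self adjmx0. Qed.

Lemma conjmD m n (A B : 'M[Cplx]_(m, n)) : conjm (A + B) = conjm A + conjm B.
Proof. by rewrite /conjm map_mxD. Qed.

Lemma jcomm_rank2 (v w : V) : jcomm (v *m adjmx w + Jv v *m adjmx (Jv w)).
Proof.
rewrite /jcomm conjmD conjmM (conjmM _ _ _ (Jv v)) conjJ !conjm_adj adjJ /Jv trmx_mul trZ.
rewrite mulmxDr mulmxDl -adjE addrC; congr (_ + _).
  by rewrite ?mulmxN ?mulNmx !mulmxA ZZ ?mulNmx ?mul1mx ?mulmxN ?opprK.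
by rewrite ?mulmxN ?mulNmx -!mulmxA ZZ ?mulmxN ?mulmx1 ?opprK.
Qed.

End J.

Lemma adj_self_entry n (v : 'cV[Cplx]_n) :
  adjmx v *m v = (\sum_k `|v k 0| ^+ 2)%:M.
Proof.
rewrite [LHS]mx11_scalar; congr scalar_mx; rewrite !mxE.
by apply: eq_bigr => k _; rewrite !mxE normCK mulrC.
Qed.

Lemma adj_self_eq0 n (v : 'cV[Cplx]_n) : adjmx v *m v = 0 -> v = 0.
Proof.
rewrite adj_self_entry => /matrixP /(_ 0 0); rewrite !mxE /= mulr1n => H.
apply/matrixP=> i j; rewrite (ord1 j) mxE.
have := psumr_eq0P (fun k _ => exprn_ge0 2 (normr_ge0 (v k 0))) H (i := i) isT.
by move/eqP; rewrite sqrf_eq0 normr_eq0 => /eqP.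
Qed.

Lemma exists_unit n (A : 'M[Cplx]_n) :
  A *m adjmx A *m A = A -> adjmx A *m A != 1%:M ->
  exists e : 'cV[Cplx]_n, A *m e = 0 /\ adjmx e *m e = 1%:M.
Proof.
set P := adjmx A *m A => HA HP.
have AP : A *m P = A by rewrite /P mulmxA.
have : 1%:M - P != 0 by rewrite subr_eq0 eq_sym.
case/matrix0Pn => i [j Hij].
set c := col j (1%:M - P).
have Ac : A *m c = 0 by rewrite /c colE mulmxA mulmxBr mulmx1 AP subrr mul0mx.
set s := \sum_k `|c k 0| ^+ 2.
have s_ge0 : 0 <= s by apply: sumr_ge0 => k _; exact: exprn_ge0.
have s_neq0 : s != 0.
  apply/eqP => H.
  have := psumr_eq0P (fun k _ => exprn_ge0 2 (normr_ge0 (c k 0))) H (i := i) isT.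
  by move/eqP; rewrite sqrf_eq0 normr_eq0 /c mxE (negbTE Hij).
set r := sqrtC s.
have r_ge0 : 0 <= r by rewrite sqrtC_ge0.
have r_neq0 : r != 0 by rewrite sqrtC_eq0.
exists (r^-1 *: c); split; first by rewrite -scalemxAr Ac scaler0.
rewrite adjmxZ -scalemxAl -scalemxAr scalerA adj_self_entry -/s scale_scalar_mx.
congr scalar_mx.
rewrite geC0_conj ?invr_ge0 //.
have -> : s = r ^+ 2 by rewrite sqrtCK.
by rewrite -expr2 -exprMn mulVf // expr1n.
Qed.

Lemma adj_row m n1 n2 (A : 'M[Cplx]_(m, n1)) (B : 'M[Cplx]_(m, n2)) :
  adjmx (row_mx A B) = col_mx (adjmx A) (adjmx B).
Proof. by rewrite /adjmx map_row_mx tr_row_mx. Qed.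

Section Step.
Context {N : nat}.
Local Notation Z := (Zmx N).
Local Notation M := ('M[Cplx]_(N + N)).
Local Notation V := ('cV[Cplx]_(N + N)).

Lemma jcomm_adj (A : M) : jcomm A -> jcomm (adjmx A).
Proof. by move=> H; rewrite /jcomm conjm_adj; symmetry; exact: jcomm_tr. Qed.

Lemma EE (v : V) : adjmx v *m v = 1%:M ->
  adjmx (row_mx v (Jv v)) *m row_mx v (Jv v) = 1%:M.
Proof.
move=> Hv; rewrite adj_row mul_col_row Hv adjJ_self adj_self_J adjJJ Hv.
by rewrite /conjm map_mx1 [RHS](scalar_mx_block 1 1).
Qed.

Lemma J_ker (A : M) (v : V) : jcomm A -> A *m v = 0 -> A *m Jv v = 0.
Proof.
move=> jA Av; rewrite /Jv mulmxA -jA -mulmxA -conjmM Av.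
by rewrite /conjm map_mx0 mulmx0.
Qed.

Lemma step (U : M) : partial_isometry U -> jcomm U -> adjmx U *m U != 1%:M ->
  exists U' : M, [/\ partial_isometry U', jcomm U',
    (forall W : M, W *m (adjmx U' *m U') = U' -> W *m (adjmx U *m U) = U) &
    (\rank (1%:M - adjmx U' *m U')%R < \rank (1%:M - adjmx U *m U)%R)%N].
Proof.
move=> pU jU HP.
have [e [Ue ee]] := exists_unit _ _ pU HP.
have pU' : adjmx U *m adjmx (adjmx U) *m adjmx U = adjmx U.
  by have := congr1 adjmx pU; rewrite !adjmxM adjmxK mulmxA.
have HQ : adjmx (adjmx U) *m adjmx U != 1%:M.
  by rewrite adjmxK; apply: contra HP => /eqP /mulmx1C ->.
have [f [Uf ff]] := exists_unit _ _ pU' HQ.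
set E := row_mx e (Jv e); set F := row_mx f (Jv f).
have UE : U *m E = 0 by rewrite /E mul_mx_row Ue (J_ker _ _ jU Ue) row_mx0.
have UF : adjmx U *m F = 0.
  by rewrite /F mul_mx_row Uf (J_ker _ _ (jcomm_adj _ jU) Uf) row_mx0.
have EE1 : adjmx E *m E = 1%:M by exact: EE.
have FF1 : adjmx F *m F = 1%:M by exact: EE.
set P := adjmx U *m U.
have UP : U *m P = U by rewrite /P mulmxA.
have PP : P *m P = P by rewrite /P mulmxA -(mulmxA (adjmx U) U) -mulmxA pU.
have EP : adjmx E *m P = 0 by rewrite /P mulmxA -adjmxM UE adjmx0 mul0mx.
have FU : adjmx F *m U = 0 by rewrite -[U]adjmxK -adjmxM UF adjmx0.
set U' := U + F *m adjmx E.
have P'E : adjmx U' *m U' = P + E *m adjmx E.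
  rewrite /U' adjmxD adjmxM adjmxK mulmxDl !mulmxDr -/P.
  rewrite mulmxA UF mul0mx [P + 0]addr0; congr (P + _).
  by rewrite -!(mulmxA E) FU mulmx0 add0r (mulmxA (adjmx F)) FF1 mul1mx.
have P'P : (P + E *m adjmx E) *m P = P by rewrite mulmxDl PP -mulmxA EP mulmx0 addr0.
exists U'; split.
- rewrite /partial_isometry -mulmxA P'E /U' mulmxDl !mulmxDr UP.
  rewrite mulmxA UE mul0mx [U + 0]addr0; congr (U + _).
  by rewrite -!(mulmxA F) EP mulmx0 add0r (mulmxA (adjmx E)) EE1 mul1mx.
- rewrite /jcomm; apply: jcomm_add => //.
  by rewrite /F /E adj_row mul_row_col; apply: jcomm_rank2.
- move=> W HW; rewrite -P'P -P'E mulmxA HW /U' mulmxDl UP -mulmxA EP mulmx0 addr0 //.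
- rewrite P'E; apply: rank_ltmx; rewrite ltmxE; apply/andP; split.
    apply/submxP; exists (1%:M - (P + E *m adjmx E)).
    rewrite mulmxBr mulmx1 mulmxBl mul1mx P'P.
    by rewrite subrr subr0.
  apply/negP => Hsub.
  have He : (adjmx e <= 1%:M - (P + E *m adjmx E))%MS.
    apply: submx_trans Hsub; apply/submxP; exists (adjmx e).
    by rewrite mulmxBr mulmx1 /P mulmxA -adjmxM Ue adjmx0 mul0mx subr0.
  case/submxP: He => x Hx.
  have Ee : (1%:M - (P + E *m adjmx E)) *m e = 0.
    rewrite mulmxBl mul1mx mulmxDl /P -mulmxA Ue mulmx0 add0r.
    by rewrite -mulmxA /E adj_row mul_col_mx ee adj_self_J mul_row_col mulmx1 mulmx0 addr0 subrr.
  have := ee; rewrite Hx -mulmxA Ee mulmx0 => /matrixP /(_ 0 0).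
  by rewrite !mxE /= => /eqP; rewrite eq_sym oner_eq0.
Qed.
End Step.

Lemma unit_case N (U : 'M[Cplx]_(N + N)) : jcomm U -> adjmx U *m U = 1%:M ->
  exists W : 'M[Cplx]_(N + N), [/\ unitary W, jcomm W & W *m (adjmx U *m U) = U].
Proof.
move=> jU HP; exists U; split => //; last by rewrite HP mulmx1.
by split => //; apply: mulmx1C.
Qed.

Lemma main_ind N n : forall U : 'M[Cplx]_(N + N), partial_isometry U -> jcomm U ->
  (\rank (1%:M - adjmx U *m U)%R <= n)%N ->
  exists W : 'M[Cplx]_(N + N), [/\ unitary W, jcomm W & W *m (adjmx U *m U) = U].
Proof.
elim: n => [|n IH] U pU jU Hr; case: (eqVneq (adjmx U *m U) 1%:M) => HP;
  try exact: unit_case.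
- move: Hr; rewrite leqn0 mxrank_eq0 subr_eq0 eq_sym.
  by rewrite (negbTE HP).
- have [U' [pU' jU' HW Hlt]] := step U pU jU HP.
  have [W [uW jW HW']] := IH U' pU' jU' (leq_trans Hlt Hr).
  by exists W; split => //; apply: HW.
Qed.

Theorem mainTheorem18 (N : nat) (U : 'M[Cplx]_(N + N)) :
  partial_isometry U -> adjmx U = sharp U ->
  exists W : 'M[Cplx]_(N + N),
    symplectic_unitary W /\
    (forall xi : 'cV[Cplx]_(N + N), perp_ker U xi -> W *m xi = U *m xi).
Proof.
move=> pU Hs.
have jU := jcomm_of_sharp U Hs.
have [W [uW jW HW]] := main_ind _ _ U pU jU (leqnn _).
exists W; split.
  split => //.
  have HtrW := jcomm_tr W jW.
  have HT : W^T = - (Zmx N *m (adjmx W *m Zmx N)).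
    by rewrite HtrW mulmxA ZZ mulNmx mul1mx opprK.
  rewrite HT !mulNmx -!mulmxA (mulmxA (Zmx N) (Zmx N) W) ZZ mulNmx mul1mx.
  by rewrite !mulmxN opprK (proj1 uW) mulmx1.
move=> xi Hxi.
set P := adjmx U *m U.
have UP : U *m P = U by rewrite /P mulmxA.
have PP : P *m P = P by rewrite /P mulmxA -(mulmxA (adjmx U) U) -mulmxA pU.
have adjP : adjmx P = P by rewrite /P adjmxM adjmxK.
set eta := xi - P *m xi.
have Ueta : U *m eta = 0 by rewrite /eta mulmxBr mulmxA UP subrr.
have H1 := Hxi eta Ueta.
have Peta : P *m eta = 0 by rewrite /eta mulmxBr mulmxA PP subrr.
have : adjmx eta *m eta = 0.
  rewrite {2}/eta mulmxBr H1 mulmxA -adjP -adjmxM Peta adjmx0 mul0mx subr0 //.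
move/adj_self_eq0; rewrite /eta => /eqP; rewrite subr_eq0 => /eqP Hx.
by rewrite {1}Hx mulmxA HW.
Qed.
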